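(* Let $\mathcal{X}$ be a finite set with $|\mathcal{X}|=N$, let $\mathcal{P}$ be a distribution of natural samples, let $\mathcal{Y}_l$ be a finite label set with class-conditional distributions $\mathcal{P}_{l_i}$ ($i\in\mathcal{Y}_l$), and let $\mathcal{T}(\cdot\mid\bar x)$ be a probability distribution on $\mathcal{X}$ for every natural sample $\bar x$. Let $\eta_u,\eta_l>0$ and define the edge weights $$w_{xx'}=\eta_u\,\mathbb{E}_{\bar x\sim\mathcal{P}}\mathcal{T}(x\mid\bar x)\mathcal{T}(x'\mid\bar x)+\eta_l\sum_{i\in\mathcal{Y}_l}\mathbb{E}_{\bar x_l\sim\mathcal{P}_{l_i}}\mathbb{E}_{\bar x_l'\sim\mathcal{P}_{l_i}}\mathcal{T}(x\mid\bar x_l)\mathcal{T}(x'\mid\bar x_l'),$$ $w_x=\sum_{x'\in\mathcal{X}}w_{xx'}$ (assumed positive), the adjacency matrix $A=(w_{xx'})_{x,x'\in\mathcal{X}}$, $D=\mathrm{diag}(w_x)$ and $\tilde A=D^{-1/2}AD^{-1/2}$. For a function $f:\mathcal{X}\to\mathbb{R}^k$ let $F\in\mathbb{R}^{N\times k}$ be the matrix whose row indexed by $x$ is $\mathbf{f}_x^\top$ with $\mathbf{f}_x=\sqrt{w_x}f(x)$, and let $\mathcal{L}_{\mathrm{mf}}(F,A)=\|\tilde A-FF^\top\|_F^2$. Then minimizing $\mathcal{L}_{\mathrm{mf}}(F,A)$ is equivalent to minimizing over $f$ the loss $$\mathcal{L}_{\mathrm{SORL}}(f)=-2\eta_l\mathcal{L}_1(f)-2\eta_u\mathcal{L}_2(f)+\eta_l^2\mathcal{L}_3(f)+2\eta_l\eta_u\mathcal{L}_4(f)+\eta_u^2\mathcal{L}_5(f),$$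 in the sense that $\mathcal{L}_{\mathrm{mf}}(F,A)=\mathcal{L}_{\mathrm{SORL}}(f)+c$ for a constant $c$ not depending on $f$, where $\mathcal{L}_1(f)=\sum_{i\in\mathcal{Y}_l}\mathbb{E}_{\bar x_l,\bar x_l'\sim\mathcal{P}_{l_i},\,x\sim\mathcal{T}(\cdot\mid\bar x_l),\,x^+\sim\mathcal{T}(\cdot\mid\bar x_l')}[f(x)^\top f(x^+)]$, $\mathcal{L}_2(f)=\mathbb{E}_{\bar x_u\sim\mathcal{P},\,x,x^+\sim\mathcal{T}(\cdot\mid\bar x_u)}[f(x)^\top f(x^+)]$, $\mathcal{L}_3(f)=\sum_{i,j\in\mathcal{Y}_l}\mathbb{E}_{\bar x_l\sim\mathcal{P}_{l_i},\bar x_l'\sim\mathcal{P}_{l_j},\,x\sim\mathcal{T}(\cdot\mid\bar x_l),\,x^-\sim\mathcal{T}(\cdot\mid\bar x_l')}[(f(x)^\top f(x^-))^2]$, $\mathcal{L}_4(f)=\sum_{i\in\mathcal{Y}_l}\mathbb{E}_{\bar x_l\sim\mathcal{P}_{l_i},\bar x_u\sim\mathcal{P},\,x\sim\mathcal{T}(\cdot\mid\bar x_l),\,x^-\sim\mathcal{T}(\cdot\mid\bar x_u)}[(f(x)^\top f(x^-))^2]$, $\mathcal{L}_5(f)=\mathbb{E}_{\bar x_u,\bar x_u'\sim\mathcal{P},\,x\sim\mathcal{T}(\cdot\mid\bar x_u),\,x^-\sim\mathcal{T}(\cdot\mid\bar x_u')}[(f(x)^\top f(x^-))^2]$.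
   Context: Samples in the sums/expectations over $x\sim\mathcal{T}(\cdot\mid\bar x)$ range over the finite augmented sample space $\mathcal{X}$; independent draws are taken for distinct variables. The first term of $w_{xx'}$ is the self-supervised connectivity (two augmentations of the same natural sample) and the second the supervised connectivity (augmentations of two labeled samples of the same known class). *)

(* Defs.v *)
From HB Require Import structures.
From mathcomp Require Import all_boot all_order all_algebra.
Set Implicit Arguments. Unset Strict Implicit. Unset Printing Implicit Defensive.
Import Order.TTheory GRing.Theory Num.Theory.
Local Open Scope ring_scope.

Section SORL.
Variables (R : rcfType) (Xbar X Yl : finType).
Variables (P : Xbar -> R) (Pl : Yl -> Xbar -> R) (T : Xbar -> X -> R).
Variables (eta_u eta_l : R).

Definition is_distr (T0 : finType) (p : T0 -> R) :=
  (forall t, 0 <= p t) /\ \sum_t p t = 1.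

Definition expect (p : Xbar -> R) (g : Xbar -> R) := \sum_xb p xb * g xb.

Definition wedge (x x' : X) : R :=
  eta_u * expect P (fun xb => T xb x * T xb x')
  + eta_l * \sum_(i : Yl) expect (Pl i) (fun xb =>
                 expect (Pl i) (fun xb' => T xb x * T xb' x')).

Definition wdeg (x : X) : R := \sum_(x' : X) wedge x x'.

Definition adjA : 'M[R]_#|X| :=
  \matrix_(i, j) wedge (enum_val i) (enum_val j).

Definition Dinvsqrt : 'M[R]_#|X| :=
  diag_mx (\row_i (Num.sqrt (wdeg (enum_val i)))^-1).

Definition Atilde : 'M[R]_#|X| := Dinvsqrt *m adjA *m Dinvsqrt.

Variable k : nat.

Definition Fmat (f : X -> 'cV[R]_k) : 'M[R]_(#|X|, k) :=
  \matrix_(i, j) (Num.sqrt (wdeg (enum_val i)) * f (enum_val i) j 0).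

Definition frob2 (m n : nat) (M : 'M[R]_(m, n)) : R :=
  \sum_i \sum_j M i j ^+ 2.

Definition L_mf (F : 'M[R]_(#|X|, k)) : R := frob2 (Atilde - F *m F^T).

Definition dotf (f : X -> 'cV[R]_k) (x y : X) : R := ((f x)^T *m f y) 0 0.

Definition expT (xb : Xbar) (g : X -> R) := \sum_x T xb x * g x.

Definition L1 f := \sum_(i : Yl) expect (Pl i) (fun xb => expect (Pl i) (fun xb' =>
   expT xb (fun x => expT xb' (fun xp => dotf f x xp)))).
Definition L2 f := expect P (fun xb =>
   expT xb (fun x => expT xb (fun xp => dotf f x xp))).
Definition L3 f := \sum_(i : Yl) \sum_(j : Yl) expect (Pl i) (fun xb =>
   expect (Pl j) (fun xb' =>
   expT xb (fun x => expT xb' (fun xn => dotf f x xn ^+ 2)))).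
Definition L4 f := \sum_(i : Yl) expect (Pl i) (fun xb => expect P (fun xb' =>
   expT xb (fun x => expT xb' (fun xn => dotf f x xn ^+ 2)))).
Definition L5 f := expect P (fun xb => expect P (fun xb' =>
   expT xb (fun x => expT xb' (fun xn => dotf f x xn ^+ 2)))).

Definition L_SORL f :=
  - (2 * eta_l * L1 f) - 2 * eta_u * L2 f + eta_l ^+ 2 * L3 f
  + 2 * eta_l * eta_u * L4 f + eta_u ^+ 2 * L5 f.

End SORL.

(* Main.v *)
Require Import Defs.
From HB Require Import structures.
From mathcomp Require Import all_boot all_order all_algebra.
From mathcomp Require Import ring.
Import Order.TTheory GRing.Theory Num.Theory.
Set Implicit Arguments. Unset Strict Implicit.
Local Open Scope ring_scope.

Definition S2 (R : rcfType) (X : finType) (g : X -> X -> R) := \sum_x \sum_y g x y.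

Lemma S2_add (R : rcfType) (X : finType) (g h : X -> X -> R) :
  S2 (fun x y => g x y + h x y) = S2 g + S2 h.
Proof. rewrite /S2 -big_split; apply: eq_bigr => x _; exact: big_split. Qed.

Lemma S2_scale (R : rcfType) (X : finType) c (g : X -> X -> R) :
  S2 (fun x y => c * g x y) = c * S2 g.
Proof. rewrite /S2 mulr_sumr; apply: eq_bigr => x _; by rewrite mulr_sumr. Qed.

Lemma S2_sum (R : rcfType) (X I : finType) (g : I -> X -> X -> R) :
  S2 (fun x y => \sum_i g i x y) = \sum_i S2 (g i).
Proof.
rewrite /S2 (eq_bigr (fun x => \sum_i \sum_y g i x y)).
  by rewrite exchange_big.
by move=> x _; rewrite exchange_big.
Qed.

Lemma S2_swap (R : rcfType) (X : finType) (g : X -> X -> R) :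
  S2 g = S2 (fun x y => g y x).
Proof. by rewrite /S2 exchange_big. Qed.

Lemma dotf_sym (R : rcfType) (X : finType) k (f : X -> 'cV[R]_k) x y :
  dotf f x y = dotf f y x.
Proof.
rewrite /dotf !mxE; apply: eq_bigr => i _; by rewrite !mxE mulrC.
Qed.

Lemma K1 (R : rcfType) (Xbar X : finType) (T : Xbar -> X -> R) (p q : Xbar -> R)
  (h : X -> X -> R) :
  S2 (fun x y => expect p (fun b => T b x) * expect q (fun b => T b y) * h x y)
  = expect p (fun b => expect q (fun b' =>
      expT T b (fun x => expT T b' (fun y => h x y)))).
Proof.
rewrite /S2 /expect /expT.
transitivity (\sum_x \sum_y \sum_b \sum_b' p b * q b' * (T b x * (T b' y * h x y))).
  apply: eq_bigr => x _; apply: eq_bigr => y _.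
  rewrite big_distrl big_distrl /=; apply: eq_bigr => b _.
  rewrite big_distrr big_distrl /=; apply: eq_bigr => b' _; ring.
transitivity (\sum_x \sum_b \sum_y \sum_b' p b * q b' * (T b x * (T b' y * h x y))).
  by apply: eq_bigr => x _; rewrite exchange_big.
rewrite exchange_big; apply: eq_bigr => b _.
rewrite big_distrr /=.
transitivity (\sum_x \sum_b' \sum_y p b * q b' * (T b x * (T b' y * h x y))).
  by apply: eq_bigr => x _; rewrite exchange_big.
rewrite exchange_big; apply: eq_bigr => b' _ /=.
rewrite mulr_sumr mulr_sumr; apply: eq_bigr => x _.
rewrite mulr_sumr mulr_sumr mulr_sumr; apply: eq_bigr => y _; ring.
Qed.
Lemma K2 (R : rcfType) (Xbar X : finType) (T : Xbar -> X -> R) (p : Xbar -> R)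
  (h : X -> X -> R) :
  S2 (fun x y => expect p (fun b => T b x * T b y) * h x y)
  = expect p (fun b => expT T b (fun x => expT T b (fun y => h x y))).
Proof.
rewrite /S2 /expect /expT.
transitivity (\sum_x \sum_y \sum_b p b * (T b x * (T b y * h x y))).
  apply: eq_bigr => x _; apply: eq_bigr => y _.
  rewrite big_distrl /=; apply: eq_bigr => b _; ring.
transitivity (\sum_x \sum_b \sum_y p b * (T b x * (T b y * h x y))).
  by apply: eq_bigr => x _; rewrite exchange_big.
rewrite exchange_big; apply: eq_bigr => b _.
rewrite mulr_sumr; apply: eq_bigr => x _.
by rewrite mulr_sumr mulr_sumr.
Qed.

Lemma expect_prod (R : rcfType) (Xbar : finType) (p q g g' : Xbar -> R) :
  expect p (fun b => expect q (fun b' => g b * g' b')) = expect p g * expect q g'.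
Proof.
rewrite /expect big_distrl; apply: eq_bigr => b _ /=.
rewrite mulr_sumr big_distrr; apply: eq_bigr => b' _ /=; ring.
Qed.

Lemma wedgeE (R : rcfType) (Xbar X Yl : finType)
  (P : Xbar -> R) (Pl : Yl -> Xbar -> R) (T : Xbar -> X -> R) (eu el : R) x y :
  wedge P Pl T eu el x y = eu * expect P (fun b => T b x * T b y)
    + el * \sum_i expect (Pl i) (fun b => T b x) * expect (Pl i) (fun b => T b y).
Proof.
rewrite /wedge; congr (_ + _ * _); apply: eq_bigr => i _.
exact: expect_prod.
Qed.

Lemma wdegE (R : rcfType) (Xbar X Yl : finType)
  (P : Xbar -> R) (Pl : Yl -> Xbar -> R) (T : Xbar -> X -> R) (eu el : R) :
  (forall i, is_distr (Pl i)) -> (forall xb, is_distr (T xb)) -> forall x,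
  wdeg P Pl T eu el x = eu * expect P (fun b => T b x)
    + el * \sum_i expect (Pl i) (fun b => T b x).
Proof.
move=> HPl HT x; rewrite /wdeg.
under eq_bigr do rewrite wedgeE.
rewrite big_split /= -!mulr_sumr; congr (_ * _ + _ * _).
  rewrite /expect exchange_big /=; apply: eq_bigr => b _.
  rewrite -mulr_sumr -mulr_sumr (proj2 (HT b)); ring.
rewrite exchange_big /=; apply: eq_bigr => i _.
rewrite -mulr_sumr.
have -> : \sum_y expect (Pl i) (fun b => T b y) = 1.
  rewrite /expect exchange_big /= -(proj2 (HPl i)); apply: eq_bigr => b _.
  by rewrite -mulr_sumr (proj2 (HT b)) mulr1.
by rewrite mulr1.
Qed.
Lemma S2_ext (R : rcfType) (X : finType) (g h : X -> X -> R) :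
  (forall x y, g x y = h x y) -> S2 g = S2 h.
Proof. by move=> E; apply: eq_bigr => x _; apply: eq_bigr => y _; apply: E. Qed.

Lemma stepB (R : rcfType) (Xbar X Yl : finType)
  (P : Xbar -> R) (Pl : Yl -> Xbar -> R) (T : Xbar -> X -> R) (eu el : R) k
  (f : X -> 'cV[R]_k) :
  (forall i, is_distr (Pl i)) -> (forall xb, is_distr (T xb)) ->
  S2 (fun x y => wdeg P Pl T eu el x * wdeg P Pl T eu el y * dotf f x y ^+ 2
                 + (-2) * (wedge P Pl T eu el x y * dotf f x y))
  = L_SORL P Pl T eu el f.
Proof.
move=> HPl HT.
pose a x := expect P (fun b => T b x).
pose e i x := expect (Pl i) (fun b => T b x).
pose d x y := dotf f x y.
pose d2 x y := dotf f x y ^+ 2.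
have h5 : S2 (fun x y => a x * a y * d2 x y) = L5 P T f.
  by rewrite /a /d2 K1.
have h4 : S2 (fun x y => (\sum_i e i x) * a y * d2 x y) = L4 P Pl T f.
  rewrite (S2_ext (h := fun x y => \sum_i e i x * a y * d2 x y)).
    rewrite S2_sum /L4; apply: eq_bigr => i _; by rewrite /e /a /d2 K1.
  by move=> x y; rewrite !big_distrl.
have h4' : S2 (fun x y => a x * (\sum_i e i y) * d2 x y) = L4 P Pl T f.
  rewrite S2_swap -h4; apply: S2_ext => x y; by rewrite /d2 dotf_sym mulrAC mulrC mulrA.
have h3 : S2 (fun x y => (\sum_i e i x) * (\sum_i e i y) * d2 x y) = L3 Pl T f.
  rewrite (S2_ext (h := fun x y => \sum_i \sum_j e i x * e j y * d2 x y)).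
    rewrite S2_sum /L3; apply: eq_bigr => i _; rewrite S2_sum.
    apply: eq_bigr => j _; by rewrite /e /d2 K1.
  move=> x y; rewrite big_distrl big_distrl /=; apply: eq_bigr => i _.
  by rewrite big_distrr big_distrl.
have h2 : S2 (fun x y => expect P (fun b => T b x * T b y) * d x y) = L2 P T f.
  by rewrite /d K2.
have h1 : S2 (fun x y => (\sum_i e i x * e i y) * d x y) = L1 Pl T f.
  rewrite (S2_ext (h := fun x y => \sum_i e i x * e i y * d x y)).
    rewrite S2_sum /L1; apply: eq_bigr => i _; by rewrite /e /d K1.
  by move=> x y; rewrite big_distrl.
rewrite (S2_ext (h := fun x y =>
   eu ^+ 2 * (a x * a y * d2 x y)
 + eu * el * ((\sum_i e i x) * a y * d2 x y)
 + eu * el * (a x * (\sum_i e i y) * d2 x y)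
 + el ^+ 2 * ((\sum_i e i x) * (\sum_i e i y) * d2 x y)
 + (-2 * eu) * (expect P (fun b => T b x * T b y) * d x y)
 + (-2 * el) * ((\sum_i e i x * e i y) * d x y))).
  rewrite !S2_add !S2_scale h1 h2 h3 h4 h4' h5 /L_SORL; ring.
move=> x y; rewrite !wdegE // wedgeE /a /e /d /d2; ring.
Qed.
Lemma alg_id (R : rcfType) (si sj W d : R) : si != 0 -> sj != 0 ->
  (si^-1 * W * sj^-1 - si * sj * d) ^+ 2
  = si ^+ 2 * sj ^+ 2 * d ^+ 2 + (-2) * (W * d) + (si^-1 * W * sj^-1) ^+ 2.
Proof. move=> hi hj; field; by rewrite hi hj. Qed.

Theorem theorem1 (R : rcfType) (Xbar X Yl : finType)
  (P : Xbar -> R) (Pl : Yl -> Xbar -> R) (T : Xbar -> X -> R)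
  (eta_u eta_l : R) (k : nat) :
  0 < eta_u -> 0 < eta_l ->
  is_distr P -> (forall i, is_distr (Pl i)) -> (forall xb, is_distr (T xb)) ->
  (forall x, 0 < wdeg P Pl T eta_u eta_l x) ->
  exists c : R, forall f : X -> 'cV[R]_k,
    L_mf P Pl T eta_u eta_l (Fmat P Pl T eta_u eta_l f)
    = L_SORL P Pl T eta_u eta_l f + c.
Proof.
move=> hu hl HP HPl HT Hw.
exists (frob2 (Atilde P Pl T eta_u eta_l)) => f.
rewrite -(@stepB _ _ _ _ P Pl T eta_u eta_l k f HPl HT) /L_mf /frob2 /S2.
pose G x y := wdeg P Pl T eta_u eta_l x * wdeg P Pl T eta_u eta_l y * dotf f x y ^+ 2
                 + (-2) * (wedge P Pl T eta_u eta_l x y * dotf f x y).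
rewrite -/(G _ _).
have Eent : forall i j, (Atilde P Pl T eta_u eta_l - Fmat P Pl T eta_u eta_l f
      *m (Fmat P Pl T eta_u eta_l f)^T) i j ^+ 2
   = G (enum_val i) (enum_val j) + Atilde P Pl T eta_u eta_l i j ^+ 2.
  move=> i j.
  have hs : forall x, Num.sqrt (wdeg P Pl T eta_u eta_l x) != 0.
    by move=> x; rewrite gt_eqF // sqrtr_gt0.
  have hA : Atilde P Pl T eta_u eta_l i j =
    (Num.sqrt (wdeg P Pl T eta_u eta_l (enum_val i)))^-1
    * wedge P Pl T eta_u eta_l (enum_val i) (enum_val j)
    * (Num.sqrt (wdeg P Pl T eta_u eta_l (enum_val j)))^-1.
    by rewrite /Atilde /Dinvsqrt mul_mx_diag mul_diag_mx !mxE.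
  have hF : (Fmat P Pl T eta_u eta_l f *m (Fmat P Pl T eta_u eta_l f)^T) i j =
    Num.sqrt (wdeg P Pl T eta_u eta_l (enum_val i))
    * Num.sqrt (wdeg P Pl T eta_u eta_l (enum_val j))
    * dotf f (enum_val i) (enum_val j).
    rewrite !mxE /dotf !mxE mulr_sumr; apply: eq_bigr => l _.
    rewrite !mxE; ring.
  have hsub : forall (M N : 'M[R]_#|X|), (M - N) i j = M i j - N i j.
    by move=> M N; rewrite !mxE.
  rewrite hsub hA hF alg_id // /G !sqr_sqrtr //; exact: ltW.
under eq_bigr do under eq_bigr do rewrite Eent.
rewrite addrC.
under eq_bigr do rewrite big_split /=.
rewrite big_split /= addrC; congr (_ + _).
have Een : forall g : X -> R, \sum_(i < #|X|) g (enum_val i) = \sum_x g x.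
  by move=> g; rewrite -big_enum_val.
rewrite -(Een (fun x => \sum_y G x y)); apply: eq_bigr => i _.
by rewrite -(Een (fun y => G (enum_val i) y)).
Qed.
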